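(* Let $k\ge1$, $\alpha\in\mathrm{REWB}_k$, and let $N=(Q,\Sigma\uplus B_k\uplus[k],\delta,q_0,F)$ be a nondeterministic finite automaton with $L(N)=\mathcal{R}_k(\alpha)$ in which every state can reach some final state (for every $q\in Q$ there are $w$ and $q_f\in F$ with $q\overset{w}{\Rightarrow}q_f$). Then for every $q\in Q$ and every $w\in(\Sigma\uplus B_k\uplus[k])^\ast$, if $q_0\overset{w}{\Rightarrow}q$ in $N$ then $w$ is matching.
   Context: Fix a finite alphabet $\Sigma$. For $k\ge1$, $[k]=\{1,\dots,k\}$, $B_k=\{[_i,\,]_i:i\in[k]\}$ (fresh brackets, pairwise disjoint from $\Sigma$ and $[k]$). $q\overset{w}{\Rightarrow}q'$ means $q'$ is reachable from $q$ by reading $w$. Rewbs: $\mathrm{REWB}_k$ and $\mathrm{var}(\alpha)\subseteq[k]$ defined inductively: $a\in\Sigma\cup\{\varepsilon\}$ ($\mathrm{var}=\emptyset$); $\backslash i$, $i\in[k]$ ($\mathrm{var}=\{i\}$); $\alpha_0\alpha_1$, $\alpha_0+\alpha_1$ (union of vars); $\alpha_0^\ast$; $(_j\alpha_0)_j$ for $j\notin\mathrm{var}(\alpha_0)$ (var gains $j$). $\mathcal{R}_k(\alpha)$ is the regular language over $\Sigma\uplus B_k\uplus[k]$ obtained by reading $\alpha$ as a regular expression with $\backslash i$ as letter $i$ and $(_i\alpha_0)_i$ as $[_i\,\mathcal{R}_k(\alpha_0)\,]_i$. Matching: write $v=v_0n_1v_1\cdots n_mv_m$ uniquely with $v_r\in(\Sigma\uplus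 B_k)^\ast$, $n_r\in[k]$, and $y_r=v_0n_1\cdots n_rv_r$. $v$ is matching if for every $r\in\{1,\dots,m\}$ and all $x_1,x_2$ with $y_{r-1}=x_1[_{n_r}x_2$ there exist $x_2',x_3$ with $x_2=x_2'\,]_{n_r}x_3$ and $x_2'$ containing neither $[_{n_r}$ nor $]_{n_r}$. *)

(* Defs.v *)
From mathcomp Require Import all_boot.
From Stdlib Require Import List.

Set Implicit Arguments.
Unset Strict Implicit.
Unset Printing Implicit Defensive.

(* Letters of Sigma ⊎ B_k ⊎ [k]; the index i ∈ [k] = {1..k} is represented by
   an ordinal of 'I_k (i.e. i-1). *)
Inductive letter (S : Type) (k : nat) : Type :=
| Sym of S
| Open of 'I_k
| Close of 'I_k
| Ref of 'I_k.

Arguments Sym {S k} _.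
Arguments Open {S k} _.
Arguments Close {S k} _.
Arguments Ref {S k} _.

Definition word (S : Type) (k : nat) := list (letter S k).

Inductive rewb (S : Type) (k : nat) : Type :=
| REps
| RSym of S
| RRef of 'I_k
| RCat of rewb S k & rewb S k
| RAlt of rewb S k & rewb S k
| RStar of rewb S k
| RCap of 'I_k & rewb S k.

Arguments REps {S k}.

Fixpoint in_var (S : Type) (k : nat) (i : 'I_k) (a : rewb S k) : Prop :=
  match a with
  | REps => False
  | RSym _ => False
  | RRef j => j = i
  | RCat a0 a1 => in_var i a0 \/ in_var i a1
  | RAlt a0 a1 => in_var i a0 \/ in_var i a1
  | RStar a0 => in_var i a0
  | RCap j a0 => j = i \/ in_var i a0
  end.

Fixpoint is_rewb (S : Type) (k : nat) (a : rewb S k) : Prop :=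
  match a with
  | REps => True
  | RSym _ => True
  | RRef _ => True
  | RCat a0 a1 => is_rewb a0 /\ is_rewb a1
  | RAlt a0 a1 => is_rewb a0 /\ is_rewb a1
  | RStar a0 => is_rewb a0
  | RCap j a0 => ~ in_var j a0 /\ is_rewb a0
  end.

Inductive star_lang (A : Type) (L : list A -> Prop) : list A -> Prop :=
| star_nil : star_lang L nil
| star_app : forall u v, L u -> star_lang L v -> star_lang L (u ++ v).

Fixpoint Rk (S : Type) (k : nat) (a : rewb S k) : word S k -> Prop :=
  match a with
  | REps => fun w => w = nil
  | RSym s => fun w => w = Sym s :: nil
  | RRef i => fun w => w = Ref i :: nil
  | RCat a0 a1 => fun w => exists u v, w = u ++ v /\ Rk a0 u /\ Rk a1 v
  | RAlt a0 a1 => fun w => Rk a0 w \/ Rk a1 w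
  | RStar a0 => star_lang (Rk a0)
  | RCap j a0 => fun w => exists u, w = Open j :: u ++ Close j :: nil /\ Rk a0 u
  end.

Record nfa (S : Type) (k : nat) := NFA {
  state : finType;
  delta : state -> letter S k -> state -> Prop;
  q0 : state;
  final : state -> Prop
}.

Fixpoint reads (S : Type) (k : nat) (N : nfa S k) (q : state N) (w : word S k)
  (q' : state N) : Prop :=
  match w with
  | nil => q = q'
  | a :: w' => exists q'', delta q a q'' /\ reads q'' w' q'
  end.

Definition nfa_lang (S : Type) (k : nat) (N : nfa S k) (w : word S k) : Prop :=
  exists qf, final qf /\ reads (q0 N) w qf.

Definition matching (S : Type) (k : nat) (v : word S k) : Prop :=
  forall (y z : word S k) (n : 'I_k),
    v = y ++ Ref n :: z ->
    forall x1 x2 : word S k, y = x1 ++ Open n :: x2 ->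
      exists x2' x3 : word S k,
        x2 = x2' ++ Close n :: x3 /\
        ~ In (Open n) x2' /\ ~ In (Close n) x2'.

(* Main.v *)
Require Import Defs.
From mathcomp Require Import all_boot.
From Stdlib Require Import List.

Section Aux.
Variables (S : finType) (k : nat) (n : 'I_k).

Definition stepn (b : bool) (x : letter S k) : option bool :=
  match x with
  | Open i => if i == n then (if b then None else Some true) else Some b
  | Close i => if i == n then (if b then Some false else None) else Some b
  | Ref i => if i == n then (if b then None else Some false) else Some b
  | Sym _ => Some b
  end.

Fixpoint runn (b : bool) (w : word S k) : option bool :=
  match w with
  | nil => Some b
  | x :: t => match stepn b x with None => None | Some b' => runn b' t end
  end.

Lemma runn_app b (u v : word S k) :
  runn b (u ++ v) = match runn b u with None => None | Some b' => runn b' v end.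
Proof.
elim: u b => [|x u IH] b //=.
by case: (stepn b x) => // b'.
Qed.

Lemma runn_novar (a : rewb S k) : ~ in_var n a ->
  forall w b, Rk a w -> runn b w = Some b.
Proof.
elim: a => [|s|j|a0 IH0 a1 IH1|a0 IH0 a1 IH1|a0 IH0|j a0 IH0] /= Hn w b.
- by move=> ->.
- by move=> ->.
- move=> -> /=. have -> : (j == n) = false by apply/eqP.
  by [].
- move=> [u [v [-> [Hu Hv]]]]. rewrite runn_app (IH0 _ u b Hu); last by tauto.
  by apply: IH1 => //; tauto.
- by case=> H; [apply: IH0 | apply: IH1] => //; tauto.
- elim=> [//|u v Hu _ IHv]. by rewrite runn_app (IH0 Hn u b Hu).
- move=> [u [-> Hu]] /=. have -> : (j == n) = false by apply/eqP; tauto.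
  rewrite runn_app (IH0 _ u b Hu); last by tauto.
  by rewrite /= ifF //; apply/eqP; tauto.
Qed.

Lemma runn_lang (a : rewb S k) : is_rewb a ->
  forall w, Rk a w -> runn false w = Some false.
Proof.
elim: a => [|s|j|a0 IH0 a1 IH1|a0 IH0 a1 IH1|a0 IH0|j a0 IH0] /= Ha w.
- by move=> ->.
- by move=> ->.
- by move=> -> /=; case: (j == n).
- move=> [u [v [-> [Hu Hv]]]]. rewrite runn_app (IH0 _ u Hu); last by tauto.
  by apply: IH1 => //; tauto.
- by case=> H; [apply: IH0 | apply: IH1] => //; tauto.
- elim=> [//|u v Hu _ IHv]. by rewrite runn_app (IH0 Ha u Hu).
- move=> [u [-> Hu]] /=. case: Ha => Hj Ha.
  case: (eqVneq j n) => [Ejn|Njn].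
  + subst j. rewrite runn_app (@runn_novar a0 Hj u true Hu) /=.
    by rewrite ?eqxx.
  + rewrite ?(negbTE Njn) runn_app (IH0 Ha u Hu) /=.
    by rewrite (negbTE Njn).
Qed.

Lemma runn_open (x : word S k) : runn true x = Some false ->
  exists x2' x3 : word S k,
    x = x2' ++ Close n :: x3 /\ ~ In (Open n) x2' /\ ~ In (Close n) x2'.
Proof.
elim: x => [|c t IH] //=.
case: c => [s|i|i|i] /=.
- move/IH=> [x2' [x3 [-> [H1 H2]]]]. exists (Sym s :: x2'), x3.
  split=> //; split=> /= -[H|H] //; by [apply: H1|apply: H2].
- case: (eqVneq i n) => [->|Nin]; first by rewrite ?eqxx.
  rewrite ?(negbTE Nin); move/IH=> [x2' [x3 [-> [H1 H2]]]]. exists (Open i :: x2'), x3.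
  split=> //; split=> /= -[H|H] //; try by [apply: H1|apply: H2].
  by case: H => E; rewrite E eqxx in Nin.
- case: (eqVneq i n) => [->|Nin] /=.
  + move=> _. exists [::], t. by split; [|split; case].
  + rewrite ?(negbTE Nin); move/IH=> [x2' [x3 [-> [H1 H2]]]]. exists (Close i :: x2'), x3.
    split=> //; split=> /= -[H|H] //; try by [apply: H1|apply: H2].
    by case: H => E; rewrite E eqxx in Nin.
- case: (eqVneq i n) => [->|Nin]; first by rewrite ?eqxx.
  rewrite ?(negbTE Nin); move/IH=> [x2' [x3 [-> [H1 H2]]]]. exists (Ref i :: x2'), x3.
  by split=> //; split=> /= -[H|H] //; by [apply: H1|apply: H2].
Qed.

End Aux.

Lemma reads_app (S : Type) (k : nat) (N : nfa S k) (u v : word S k) (q m q' : state N) :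
  reads q u m -> reads m v q' -> reads q (u ++ v) q'.
Proof.
elim: u q => [|x u IH] q /=; first by move=> ->.
move=> [q'' [Hd Hr]] Hv. exists q''. split=> //. exact: IH Hr Hv.
Qed.

Theorem mainTheorem5 (S : finType) (k : nat) (hk : 1 <= k)
  (alpha : rewb S k) (halpha : is_rewb alpha)
  (N : nfa S k)
  (hL : forall w : word S k, nfa_lang N w <-> Rk alpha w)
  (htrim : forall q : state N, exists (w : word S k) (qf : state N),
             final qf /\ reads q w qf) :
  forall (q : state N) (w : word S k), reads (q0 N) w q -> matching w.
Proof.
move=> q w Hr y z n Hw x1 x2 Hy.
have [w' [qf [Hf Hr']]] := htrim q.
have HR : Rk alpha (w ++ w') by apply/hL; exists qf; split=> //; exact: reads_app Hr Hr'.
have := @runn_lang S k n alpha halpha _ HR.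
rewrite Hw Hy -!app_assoc /= runn_app.
case: (@runn S k n false x1) => [c|] //=.
rewrite eqxx; case: c => //.
rewrite runn_app.
case E: (@runn S k n true x2) => [d|] //=.
rewrite eqxx; case: d E => // E _.
exact: runn_open E.
Qed.
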